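(* Consider the system $x(k+1)=Ax(k)+Bu(k)$ with $A\in\mathbb{R}^{n\times n}$, $B\in\mathbb{R}^{n\times m}$ and $(A,B)$ controllable. Let $\{u_i^{[0,T_i-1]},x_i^{[0,T_i-1]}\}_{i=1}^p$ be $p$ input-state trajectories of this system, let $L\ge1$, and let $\alpha_1,\dots,\alpha_p$ be any nonzero real weights (used in all matrices below). Call a pair $(\bar x^{[0,L-1]},\bar u^{[0,L-1]})$ an $L$-long input-state trajectory if $\bar x(k+1)=A\bar x(k)+B\bar u(k)$ for $k=0,\dots,L-2$; write $\bar x^{[0,L-1]}$, $\bar u^{[0,L-1]}$ also for the stacked column vectors. 1) If $T_1=\dots=T_p=T_0$ and $\{u_i^{[0,T_0-1]}\}_{i=1}^p$ are CCPE of order $L+n$, then for every $L$-long input-state trajectory there is a real vector $g$ with $\begin{bmatrix}\bar x^{[0,L-1]}\\ \bar u^{[0,L-1]}\end{bmatrix}=\begin{bmatrix}H_L^{cum}(\{x_i^{[0,T_0-1]}\}_{i=1}^p)\\ H_L^{cum}(\{u_i^{[0,T_0-1]}\}_{i=1}^p)\end{bmatrix}g$. 2) If $\{u_i^{[0,T_i-1]}\}_{i=1}^p$ are MCPE of order $L+n$, then for every $L$-long input-state trajectory there is a real vector $g$ with $\begin{bmatrix}\bar x^{[0,L-1]}\\ \bar u^{[0,L-1]}\end{bmatrix}=\begin{bmatrix}H_L^{mos}(\{x_i^{[0,T_i-1]}\}_{i=1}^p)\\ H_L^{mos}(\{u_i^{[0,T_i-1]}\}_{i=1}^p)\end{bmatrix}g$.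 3) If $T_1=\dots=T_{\bar p}=T_0$ and $\{u_i^{[0,T_i-1]}\}_{i=1}^p$ are HCPE of order $L+n$ (cumulative part $u_1,\dots,u_{\bar p}$), then for every $L$-long input-state trajectory there is a real vector $g$ with $\begin{bmatrix}\bar x^{[0,L-1]}\\ \bar u^{[0,L-1]}\end{bmatrix}=\begin{bmatrix}H_L^{hyb}(\{x_i^{[0,T_i-1]}\}_{i=1}^p)\\ H_L^{hyb}(\{u_i^{[0,T_i-1]}\}_{i=1}^p)\end{bmatrix}g$.
   Context: For a sequence $z^{[0,T-1]}$ with $z(k)\in\mathbb{R}^q$ and $L\le T$, $H_L(z^{[0,T-1]})\in\mathbb{R}^{qL\times(T-L+1)}$ is the block Hankel matrix with $(r,c)$ block entry $z(r+c)$. With nonzero weights $\alpha_i$: $H_L^{mos}(\{z_i\}_{i=1}^p)=[\alpha_1H_L(z_1)\ \cdots\ \alpha_pH_L(z_p)]$; for equal-length sequences $H_L^{cum}(\{z_i\}_{i=1}^p)=\sum_i\alpha_iH_L(z_i)$; $H_L^{hyb}(\{z_i\}_{i=1}^p)=[H_L^{cum}(\{z_i\}_{i=1}^{\bar p})\ \ H_L^{mos}(\{z_i\}_{i=\bar p+1}^p)]$ with $z_1,\dots,z_{\bar p}$ of equal length. Input signals $u_i\in\mathbb{R}^m$ are MCPE (resp. CCPE, HCPE) of order $K$ if $H_K^{mos}$ (resp. $H_K^{cum}$, $H_K^{hyb}$) of the input sequences has full row rank $mK$ for every choice of nonzero weights. *)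

(* Defs.v *)
From HB Require Import structures.
From mathcomp Require Import all_boot all_order all_algebra.
From mathcomp Require Export reals.
Set Implicit Arguments. Unset Strict Implicit. Unset Printing Implicit Defensive.
Import Order.TTheory GRing.Theory Num.Theory.
Local Open Scope ring_scope.

(* Signals are functions nat -> 'cV_q; only the first T values matter. *)

(* stacked column vector [z(0); z(1); ...; z(L-1)] of size L*q *)
Definition stack (R : ringType) (q : nat) (L : nat) (z : nat -> 'cV[R]_q)
  : 'cV[R]_(L * q) :=
  (mxvec (\matrix_(r < L, a < q) z r a 0))^T.

Definition hankel (R : ringType) (q : nat) (L : nat) (z : nat -> 'cV[R]_q)
  (T : nat) : 'M[R]_(L * q, T - L + 1) :=
  \matrix_(i, j) stack L (fun k => z (k + j)) i 0.

Definition hankel_mos (R : ringType) (q : nat) (L : nat)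
  (z : nat -> nat -> 'cV[R]_q) (alpha : nat -> R) (p : nat) (T : nat -> nat)
  : 'M[R]_(L * q, \sum_(i < p) (T i - L + 1)) :=
  \mxrow_(i < p) (alpha i *: hankel L (z i) (T i)).

Definition hankel_cum (R : ringType) (q : nat) (L : nat)
  (z : nat -> nat -> 'cV[R]_q) (alpha : nat -> R) (p : nat) (T0 : nat)
  : 'M[R]_(L * q, T0 - L + 1) :=
  \sum_(i < p) alpha i *: hankel L (z i) T0.

Definition hankel_hyb (R : ringType) (q : nat) (L : nat)
  (z : nat -> nat -> 'cV[R]_q) (alpha : nat -> R) (pbar p : nat) (T0 : nat)
  (T : nat -> nat) :=
  row_mx (hankel_cum L z alpha pbar T0)
         (hankel_mos L (fun j => z (pbar + j)%N) (fun j => alpha (pbar + j)%N)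
                     (p - pbar) (fun j => T (pbar + j)%N)).

Definition MCPE (R : fieldType) (m : nat) (u : nat -> nat -> 'cV[R]_m)
  (p : nat) (T : nat -> nat) (K : nat) : Prop :=
  (forall i, (i < p)%N -> (K <= T i)%N) /\
  forall alpha : nat -> R, (forall i, (i < p)%N -> alpha i != 0) ->
    row_free (hankel_mos K u alpha p T).

Definition CCPE (R : fieldType) (m : nat) (u : nat -> nat -> 'cV[R]_m)
  (p : nat) (T0 : nat) (K : nat) : Prop :=
  (K <= T0)%N /\
  forall alpha : nat -> R, (forall i, (i < p)%N -> alpha i != 0) ->
    row_free (hankel_cum K u alpha p T0).

Definition HCPE (R : fieldType) (m : nat) (u : nat -> nat -> 'cV[R]_m)
  (pbar p : nat) (T0 : nat) (T : nat -> nat) (K : nat) : Prop :=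
  (pbar <= p)%N /\ ((0 < pbar)%N -> (K <= T0)%N) /\
  (forall i, (pbar <= i < p)%N -> (K <= T i)%N) /\
  forall alpha : nat -> R, (forall i, (i < p)%N -> alpha i != 0) ->
    row_free (hankel_hyb K u alpha pbar p T0 T).

Definition controllable (R : fieldType) (n m : nat) (A : 'M[R]_n)
  (B : 'M[R]_(n, m)) : Prop :=
  \rank (\mxrow_(k < n) (A ^+ k *m B)) = n.

Definition is_traj (R : ringType) (n m : nat) (A : 'M[R]_n) (B : 'M[R]_(n, m))
  (x : nat -> 'cV[R]_n) (u : nat -> 'cV[R]_m) (T : nat) : Prop :=
  forall k, (k.+1 < T)%N -> x k.+1 = A *m x k + B *m u k.

(* Main.v *)
Require Import Defs.
From HB Require Import structures.
From mathcomp Require Import all_boot all_order all_algebra.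
From mathcomp Require Import reals zify.
Set Implicit Arguments. Unset Strict Implicit. Unset Printing Implicit Defensive.
Import Order.TTheory GRing.Theory Num.Theory.
Local Open Scope ring_scope.

Section Gen.
Variable R : fieldType.

Definition blk q L (y : 'rV[R]_(L * q)) (k : 'I_L) : 'rV[R]_q :=
  \row_a y 0 (mxvec_index k a).

Lemma stackE q L (z : nat -> 'cV[R]_q) (r : 'I_L) a :
  stack L z (mxvec_index r a) 0 = z r a 0.
Proof. by rewrite /stack mxE mxvecE mxE. Qed.

Lemma dot_stack q L (y : 'rV[R]_(L * q)) (z : nat -> 'cV[R]_q) :
  y *m stack L z = \sum_(k < L) blk y k *m z k.
Proof.
apply/rowP=> i; rewrite {i}ord1 !mxE summxE.
rewrite (reindex _ (curry_mxvec_bij _ _)) /=.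
under [RHS]eq_bigr do rewrite mxE.
rewrite pair_bigA; apply: eq_bigr => [[r a]] _ /=.
by rewrite stackE !mxE.
Qed.


Lemma tri (V : zmodType) N (f : nat -> nat -> V) :
  \sum_(0 <= k < N) \sum_(0 <= t < k) f k t =
  \sum_(0 <= t < N) \sum_(t.+1 <= k < N) f k t.
Proof.
elim: N => [|N IH]; first by rewrite !big_geq.
rewrite big_nat_recr //= IH [in RHS]big_nat_recr //= [in X in _ = _ + X]big_geq //.
rewrite addr0 -big_split /=; apply: eq_big_nat => t /andP[_ ltN].
by rewrite [in RHS]big_nat_recr.
Qed.

Lemma CH_rel n (A : 'M[R]_n) :
  exists a : nat -> R, a n = 1 /\ \sum_(0 <= s < n.+1) a s *: A ^+ s = 0.
Proof.
case: n A => [|n] A.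
  by exists (fun _ => 1); split => //; apply/matrixP => [[]].
exists (fun s => (char_poly A)`_s); split.
  have := char_poly_monic A; rewrite monicE /lead_coef size_char_poly.
  by move/eqP.
transitivity (horner_mx A (char_poly A)); last exact: Cayley_Hamilton.
rewrite -[in RHS](coefK (char_poly A)) poly_def rmorph_sum size_char_poly big_mkord.
apply: eq_bigr => i _.
by rewrite -mul_polyC rmorphM /= horner_mx_C rmorphXn /= horner_mx_X -mulmxE mul_scalar_mx.
Qed.

Lemma big1_nat (V : zmodType) a b (F : nat -> V) :
  (forall i, (a <= i < b)%N -> F i = 0) -> \sum_(a <= i < b) F i = 0.
Proof. by move=> H; rewrite big_nat_cond big1 // => i /andP[/H]. Qed.

Section Core.
Variables (n m L : nat) (A : 'M[R]_n) (B : 'M[R]_(n, m)).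

Lemma mulA_exp k : A *m A ^+ k = A ^+ k.+1.
Proof. by rewrite exprS. Qed.

Lemma expand (x : nat -> 'cV[R]_n) (u : nat -> 'cV[R]_m) j N :
  (forall t, (t.+1 < N)%N -> x (j + t)%N.+1 = A *m x (j + t)%N + B *m u (j + t)%N) ->
  forall k, (k < N)%N -> x (j + k)%N =
    A ^+ k *m x j + \sum_(0 <= t < k) A ^+ (k - t.+1) *m B *m u (j + t)%N.
Proof.
move=> dyn; elim=> [|k IH] ltkN.
  by rewrite addn0 expr0 mul1mx big_geq // addr0.
rewrite addnS dyn // IH 1?ltnW // mulmxDr mulmxA mulA_exp big_nat_recr //=.
rewrite subnn expr0 mul1mx addrA; congr (_ + _ + _).
rewrite mulmx_sumr; apply: eq_big_nat => t /andP[_ ltk].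
by rewrite !mulmxA mulA_exp subSS -subSn.
Qed.

Definition Fn (xi : nat -> 'rV[R]_n) (eta : nat -> 'rV[R]_m)
  (x : nat -> 'cV[R]_n) (u : nat -> 'cV[R]_m) j : 'M[R]_1 :=
  \sum_(0 <= k < L) (xi k *m x (k + j)%N + eta k *m u (k + j)%N).

Definition zeta (xi : nat -> 'rV[R]_n) := \sum_(0 <= k < L) xi k *m A ^+ k.
Definition theta (xi : nat -> 'rV[R]_n) (eta : nat -> 'rV[R]_m) t :=
  eta t + \sum_(t.+1 <= k < L) xi k *m A ^+ (k - t.+1) *m B.

Lemma Fexp xi eta x u j :
  (forall t, (t.+1 < L)%N -> x (j + t)%N.+1 = A *m x (j + t)%N + B *m u (j + t)%N) ->
  Fn xi eta x u j = zeta xi *m x j + \sum_(0 <= t < L) theta xi eta t *m u (j + t)%N.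
Proof.
move=> dyn; rewrite /Fn big_split /=.
rewrite (eq_big_nat _ _ (F2 := fun k => xi k *m A ^+ k *m x j +
   \sum_(0 <= t < k) xi k *m A ^+ (k - t.+1) *m B *m u (j + t)%N)); last first.
  move=> k /andP[_ ltk]; rewrite addnC (expand dyn ltk) mulmxDr mulmxA mulmx_sumr.
  by congr (_ + _); apply: eq_bigr => t _; rewrite !mulmxA.
rewrite big_split /= tri -mulmx_suml -addrA; congr (_ + _).
rewrite -big_split /=; apply: eq_bigr => t _.
rewrite /theta mulmxDl addrC addnC; congr (_ + _).
by rewrite mulmx_suml.
Qed.


Hypothesis L0 : (0 < L)%N.

Lemma ML (ctrl : controllable A B)
  (win : (nat -> 'cV[R]_n) -> (nat -> 'cV[R]_m) -> nat -> Prop) xi eta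
  (dyn : forall x u j, win x u j -> forall t, (t.+1 < L + n)%N ->
          x (j + t)%N.+1 = A *m x (j + t)%N + B *m u (j + t)%N)
  (PE : forall g : nat -> 'rV[R]_m,
     (forall x u j, win x u j -> \sum_(0 <= k < L + n) g k *m u (j + k)%N = 0) ->
     forall k, (k < L + n)%N -> g k = 0)
  (HZ : forall x u j, win x u j -> forall s, (s <= n)%N -> Fn xi eta x u (j + s)%N = 0) :
  forall xb ub, is_traj A B xb ub L -> Fn xi eta xb ub 0 = 0.
Proof.
have [a [an Ha]] := CH_rel A.
set z := zeta xi; set th := theta xi eta.
pose c s k := if (k < s)%N then z *m A ^+ (s - k.+1) *m B
              else if (k - s < L)%N then th (k - s)%N else 0.
pose g k := \sum_(0 <= s < n.+1) a s *: c s k.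
have Gs : forall x u j, win x u j -> forall s, (s <= n)%N ->
    z *m A ^+ s *m x j + \sum_(0 <= k < L + n) c s k *m u (j + k)%N = 0.
  move=> x u j w s sn; have := HZ _ _ _ w s sn.
  rewrite Fexp; last by move=> t tL; rewrite -addnA; apply: (dyn _ _ _ w); lia.
  have sK : (s < L + n)%N by lia.
  rewrite (expand (dyn _ _ _ w) sK) mulmxDr mulmxA -addrA => H; apply: etrans H.
  congr (_ + _).
  have -> : \sum_(0 <= k < L + n) c s k *m u (j + k)%N =
     \sum_(0 <= k < s) c s k *m u (j + k)%N +
     (\sum_(s <= k < s + L) c s k *m u (j + k)%N +
      \sum_(s + L <= k < L + n) c s k *m u (j + k)%N).
    rewrite (big_cat_nat _ (n := s)) //=; last by lia.
    by rewrite (big_cat_nat _ (m := s) (n := (s + L)%N)) //=; lia.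
  rewrite [X in _ + (_ + X)]big1_nat ?addr0; last first.
    move=> k /andP[k1 k2]; rewrite /c ltnNge (leq_trans _ k1) ?leq_addr //=.
    by rewrite ifF ?mul0mx //; apply/negbTE; rewrite -leqNgt; lia.
  rewrite mulmx_sumr; congr (_ + _).
    by apply: eq_big_nat => k /andP[_ ks]; rewrite /c ks !mulmxA.
  rewrite -{1}[s]add0n big_addn addKn; apply: eq_big_nat => k /andP[_ kL].
  by rewrite /c ltnNge leq_addl /= addnK kL [(k + s)%N]addnC addnA.
have g0 : forall k, (k < L + n)%N -> g k = 0.
  apply: PE => x u j w.
  have H : \sum_(0 <= s < n.+1) (a s *: (z *m A ^+ s *m x j) + a s *:
        \sum_(0 <= k < L + n) c s k *m u (j + k)%N) = 0.
    by apply: big1_nat => s /andP[_ sn]; rewrite -scalerDr Gs ?scaler0.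
  rewrite big_split /= in H.
  have E1 : \sum_(0 <= s < n.+1) a s *: (z *m A ^+ s *m x j) = 0.
    rewrite (eq_big_nat _ _ (F2 := fun s => z *m (a s *: A ^+ s) *m x j)); last first.
      by move=> s _; rewrite scalemxAl scalemxAr.
    by rewrite -mulmx_suml -mulmx_sumr Ha mulmx0 mul0mx.
  rewrite E1 add0r in H; apply: etrans H; symmetry.
  rewrite (eq_big_nat _ _ (F2 := fun s => \sum_(0 <= k < L + n) (a s *: c s k) *m u (j + k)%N)); last first.
    by move=> s _; rewrite scaler_sumr; apply: eq_bigr => k _; rewrite scalemxAl.
  rewrite exchange_big_nat /=; apply: eq_bigr => k _.
  by rewrite /g mulmx_suml.
have th0 : forall d t, (L - t <= d)%N -> (t < L)%N -> th t = 0.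
  elim=> [|d IH] t Ld tL; first by lia.
  have := g0 (n + t)%N; rewrite /g big_nat_recr //= an scale1r.
  have -> : c n (n + t)%N = th t by rewrite /c ltnNge leq_addr /= addKn tL.
  rewrite big1_nat ?add0r; first by apply; lia.
  move=> s /andP[_ sn]; rewrite /c ltnNge (leq_trans (ltnW sn)) ?leq_addr //=.
  case: ifP => ltL; last by rewrite scaler0.
  by rewrite (IH _ _ ltL) ?scaler0 //; lia.
have zAB0 : forall d, (d < n)%N -> z *m A ^+ d *m B = 0.
  elim/ltn_ind => d IH dn.
  have := g0 (n - d.+1)%N; rewrite /g big_nat_recr //= an scale1r.
  have -> : c n (n - d.+1)%N = z *m A ^+ d *m B.
    by rewrite /c ifT; [congr (_ *m _ ^+ _ *m _); lia | lia].
  rewrite big1_nat ?add0r; first by apply; lia.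
  move=> s /andP[_ sn]; rewrite /c; case: ifP => ks.
    by rewrite IH ?scaler0 //; lia.
  case: ifP => ltL; last by rewrite scaler0.
  by rewrite (th0 L) ?scaler0 //; lia.
have z0 : z = 0.
  have fr : row_free (\mxrow_(k < n) (A ^+ k *m B)) by rewrite /row_free ctrl.
  apply/eqP; rewrite -(mulmx_free_eq0 _ fr) mul_mxrow -(mxrow0 (q_ := fun=> m)).
  by apply/eqP/eq_mxrow => k; rewrite mulmxA zAB0.
move=> xb ub tr; rewrite Fexp; last by move=> t tL; rewrite !add0n; apply: tr.
rewrite -/z -/th z0 mul0mx add0r; apply: big1_nat => t /andP[_ tL].
by rewrite (th0 L) ?mul0mx //; lia.
Qed.
End Core.

Definition blkn q L (y : 'rV[R]_(L * q)) (k : nat) : 'rV[R]_q :=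
  if insub k is Some i then blk y i else 0.

Lemma dot_stackn q L (y : 'rV[R]_(L * q)) (z : nat -> 'cV[R]_q) :
  y *m stack L z = \sum_(0 <= k < L) blkn y k *m z k.
Proof.
rewrite dot_stack big_mkord; apply: eq_bigr => i _.
by rewrite /blkn valK.
Qed.

Lemma blkn_mxvec q K (g : nat -> 'rV[R]_q) k : (k < K)%N ->
  blkn (mxvec (\matrix_(k0 < K, a < q) g k0 0 a)) k = g k.
Proof.
move=> kK; rewrite /blkn; case: insubP => [i _ ik|]; last by rewrite kK.
by apply/rowP => a; rewrite !mxE mxvecE mxE ik.
Qed.

Lemma blkn0 q K k : blkn (0 : 'rV[R]_(K * q)) k = 0.
Proof.
by rewrite /blkn; case: insub => // i; apply/rowP => a; rewrite !mxE.
Qed.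

Lemma eq_stack q L (z1 z2 : nat -> 'cV[R]_q) :
  (forall k, z1 k = z2 k) -> stack L z1 = stack L z2.
Proof. by move=> e; rewrite /stack; congr (mxvec _)^T; apply/matrixP => r a; rewrite !mxE e. Qed.

Lemma hankel_col q L (z : nat -> 'cV[R]_q) T (y : 'rV[R]_(L * q)) j :
  (y *m hankel L z T) 0 j = (y *m stack L (fun k => z (k + j)%N)) 0 0.
Proof. by rewrite !mxE; apply: eq_bigr => i _; rewrite !mxE. Qed.


Lemma FnE2 n m L (y1 : 'rV[R]_(L * n)) (y2 : 'rV[R]_(L * m)) x u j :
  Fn L (blkn y1) (blkn y2) x u j =
  y1 *m stack L (fun k => x (k + j)%N) + y2 *m stack L (fun k => u (k + j)%N).
Proof. by rewrite !dot_stackn /Fn big_split. Qed.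

Lemma colspace r c (M : 'M[R]_(r, c)) (w : 'cV[R]_r) :
  (forall y : 'rV[R]_r, y *m M = 0 -> y *m w = 0) -> exists g, w = M *m g.
Proof.
move=> H.
have : (w^T <= M^T)%MS.
  rewrite submxE; apply/eqP; apply: trmx_inj; rewrite trmx0 trmx_mul.
  apply/row_matrixP => i; rewrite row_mul row0 trmxK; apply: H.
  have E : (cokermx M^T)^T *m M = 0.
    by apply: trmx_inj; rewrite trmx_mul trmxK mulmx_coker trmx0.
  by rewrite -row_mul E row0.
by case/submxP => D wD; exists D^T; rewrite -[w]trmxK wD trmx_mul trmxK.
Qed.

Lemma mx11_eq0 (M : 'M[R]_1) : M 0 0 = 0 -> M = 0.
Proof. by move=> h; apply/matrixP => i j; rewrite !ord1 h mxE. Qed.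

Lemma hankel_Fn n m L (y1 : 'rV[R]_(L * n)) (y2 : 'rV[R]_(L * m)) x u T :
  y1 *m hankel L x T + y2 *m hankel L u T = 0 ->
  forall j, (j < T - L + 1)%N -> Fn L (blkn y1) (blkn y2) x u j = 0.
Proof.
move=> H j jT; apply: mx11_eq0; rewrite FnE2.
move/matrixP: H => /(_ 0 (Ordinal jT)); rewrite mxE !hankel_col [X in _ = X]mxE => E.
by rewrite mxE.
Qed.

Lemma hankel_mos_Fn n m L (y1 : 'rV[R]_(L * n)) (y2 : 'rV[R]_(L * m)) x u
   alpha p T :
  (forall i, (i < p)%N -> alpha i != 0) ->
  y1 *m hankel_mos L x alpha p T + y2 *m hankel_mos L u alpha p T = 0 ->
  forall i, (i < p)%N -> forall j, (j < T i - L + 1)%N ->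
     Fn L (blkn y1) (blkn y2) (x i) (u i) j = 0.
Proof.
move=> aNZ H i ip; apply: hankel_Fn.
move: H; rewrite /hankel_mos !mul_mxrow -mxrowD -(mxrow0 (q_ := fun i : 'I_p => (T i - L + 1)%N)).
move/eq_mxrowP => /(_ (Ordinal ip)) /=.
rewrite -!scalemxAr -scalerDr => /eqP; rewrite scaler_eq0 (negbTE (aNZ _ ip)) /=.
by move/eqP.
Qed.

Lemma PE_from m K N (Mu : 'M[R]_(K * m, N)) n
  (win : (nat -> 'cV[R]_n) -> (nat -> 'cV[R]_m) -> nat -> Prop) :
  row_free Mu ->
  (forall y0 : 'rV[R]_(K * m),
     (forall x u j, win x u j -> y0 *m stack K (fun k => u (k + j)%N) = 0) ->
     y0 *m Mu = 0) ->
  forall g : nat -> 'rV[R]_m,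
   (forall x u j, win x u j -> \sum_(0 <= k < K) g k *m u (j + k)%N = 0) ->
   forall k, (k < K)%N -> g k = 0.
Proof.
move=> fr H g Hg k kK.
pose y0 := mxvec (\matrix_(k0 < K, a < m) g k0 0 a).
have : y0 *m Mu = 0.
  apply: H => x u j w; rewrite dot_stackn; apply: etrans (Hg _ _ _ w).
  by apply: eq_big_nat => k0 /andP[_ k0K]; rewrite blkn_mxvec // addnC.
move/eqP; rewrite mulmx_free_eq0 // => /eqP y00.
by rewrite -(blkn_mxvec g kK) -/y0 y00 blkn0.
Qed.

Lemma PE_hankel m K (u : nat -> 'cV[R]_m) T (y0 : 'rV[R]_(K * m)) :
  (forall j, (j < T - K + 1)%N -> y0 *m stack K (fun k => u (k + j)%N) = 0) ->
  y0 *m hankel K u T = 0.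
Proof.
move=> H; apply/matrixP => i j; rewrite ord1 hankel_col (H j) ?mxE //.
Qed.

Lemma PE_mos m K (u : nat -> nat -> 'cV[R]_m) alpha p T (y0 : 'rV[R]_(K * m)) :
  (forall i, (i < p)%N -> forall j, (j < T i - K + 1)%N ->
      y0 *m stack K (fun k => u i (k + j)%N) = 0) ->
  y0 *m hankel_mos K u alpha p T = 0.
Proof.
move=> H; rewrite /hankel_mos mul_mxrow -(mxrow0 (q_ := fun i : 'I_p => (T i - K + 1)%N)).
apply: eq_mxrow => i; rewrite -scalemxAr PE_hankel ?scaler0 //.
by move=> j jT; apply: H.
Qed.

Lemma hankel_cumE q L (z : nat -> nat -> 'cV[R]_q) alpha p T0 :
  hankel_cum L z alpha p T0 =
  hankel L (fun t => \sum_(i < p) alpha i *: z i t) T0.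
Proof.
apply/matrixP => r c; rewrite /hankel_cum summxE !mxE.
case/mxvec_indexP: r => a b; rewrite mxvecE mxE summxE.
by apply: eq_bigr => i _; rewrite !mxE mxvecE !mxE.
Qed.

Lemma traj_sum n m (A : 'M[R]_n) (B : 'M[R]_(n, m)) x u (alpha : nat -> R) p T0 :
  (forall i, (i < p)%N -> is_traj A B (x i) (u i) T0) ->
  is_traj A B (fun t => \sum_(i < p) alpha i *: x i t)
              (fun t => \sum_(i < p) alpha i *: u i t) T0.
Proof.
move=> H k kT; rewrite !mulmx_sumr -big_split /=; apply: eq_bigr => i _.
by rewrite H // scalerDr -!scalemxAr.
Qed.


Lemma final n m L (A : 'M[R]_n) (B : 'M[R]_(n, m)) (L0 : (0 < L)%N)
  (ctrl : controllable A B) N (Mx : 'M[R]_(L * n, N)) (Mu : 'M[R]_(L * m, N))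
  (win : (nat -> 'cV[R]_n) -> (nat -> 'cV[R]_m) -> nat -> Prop)
  (dyn : forall x u j, win x u j -> forall t, (t.+1 < L + n)%N ->
          x (j + t)%N.+1 = A *m x (j + t)%N + B *m u (j + t)%N)
  (PE : forall g : nat -> 'rV[R]_m,
     (forall x u j, win x u j -> \sum_(0 <= k < L + n) g k *m u (j + k)%N = 0) ->
     forall k, (k < L + n)%N -> g k = 0)
  (HZ : forall y1 y2, y1 *m Mx + y2 *m Mu = 0 -> forall x u j, win x u j ->
     forall s, (s <= n)%N -> Fn L (blkn y1) (blkn y2) x u (j + s)%N = 0)
  xb ub (tr : is_traj A B xb ub L) :
  exists g, col_mx (stack L xb) (stack L ub) = col_mx Mx Mu *m g.
Proof.
apply: colspace => y; rewrite -[y]hsubmxK !mul_row_col => Hy.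
have := ML L0 ctrl dyn PE (HZ _ _ Hy) tr; rewrite FnE2.
by rewrite (eq_stack _ (z2 := xb)) ?(eq_stack _ (z2 := ub)) // => k; rewrite addn0.
Qed.

End Gen.

Unset Implicit Arguments. Set Strict Implicit. Set Printing Implicit Defensive.

Theorem lemma2 (R : realType) (n m : nat) (A : 'M[R]_n) (B : 'M[R]_(n, m))
  (p : nat) (x : nat -> nat -> 'cV[R]_n) (u : nat -> nat -> 'cV[R]_m)
  (T : nat -> nat) (L : nat) (alpha : nat -> R) :
  controllable A B ->
  (forall i, (i < p)%N -> is_traj A B (x i) (u i) (T i)) ->
  (1 <= L)%N ->
  (forall i, (i < p)%N -> alpha i != 0) ->
  [/\
   (* 1) cumulative *)
   forall T0 : nat, (forall i, (i < p)%N -> T i = T0) ->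
     CCPE u p T0 (L + n) ->
     forall (xb : nat -> 'cV[R]_n) (ub : nat -> 'cV[R]_m), is_traj A B xb ub L ->
     exists g : 'cV[R]_(T0 - L + 1),
       col_mx (stack L xb) (stack L ub) =
       col_mx (hankel_cum L x alpha p T0) (hankel_cum L u alpha p T0) *m g,
   (* 2) mosaic *)
   MCPE u p T (L + n) ->
     forall (xb : nat -> 'cV[R]_n) (ub : nat -> 'cV[R]_m), is_traj A B xb ub L ->
     exists g : 'cV[R]_(\sum_(i < p) (T i - L + 1)),
       col_mx (stack L xb) (stack L ub) =
       col_mx (hankel_mos L x alpha p T) (hankel_mos L u alpha p T) *m g
   & (* 3) hybrid *)
   forall (pbar T0 : nat), (forall i, (i < pbar)%N -> T i = T0) ->
     HCPE u pbar p T0 T (L + n) ->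
     forall (xb : nat -> 'cV[R]_n) (ub : nat -> 'cV[R]_m), is_traj A B xb ub L ->
     exists g,
       col_mx (stack L xb) (stack L ub) =
       col_mx (hankel_hyb L x alpha pbar p T0 T)
              (hankel_hyb L u alpha pbar p T0 T) *m g].
Proof.
move=> ctrl trajs L0 aNZ; split.
- move=> T0 HT [KT0 cc] xb ub tr.
  pose xs := fun t => \sum_(i < p) alpha i *: x i t.
  pose us := fun t => \sum_(i < p) alpha i *: u i t.
  have trs : is_traj A B xs us T0.
    by apply: traj_sum => i ip; rewrite -(HT i ip); apply: trajs.
  rewrite !hankel_cumE.
  apply: (final L0 ctrl (win := fun x' u' j => [/\ x' = xs, u' = us & (j + (L + n) <= T0)%N])).
  + by move=> x' u' j [-> -> jK] t tK; apply: trs; lia.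
  + apply: (PE_from (Mu := hankel (L + n) us T0)).
      by have := cc alpha aNZ; rewrite hankel_cumE.
    move=> y0 Hy0; apply: PE_hankel => j jT; apply: (Hy0 xs us j); split => //; lia.
  + by move=> y1 y2 H x' u' j [-> -> jK] s sn; apply: (hankel_Fn H); lia.
  exact: tr.
- move=> [KT mc] xb ub tr.
  apply: (final L0 ctrl (win := fun x' u' j => exists i,
      [/\ (i < p)%N, x' = x i, u' = u i & (j + (L + n) <= T i)%N])).
  + move=> x' u' j [i [ip -> -> jK]] t tK; apply: (trajs i ip); lia.
  + apply: (PE_from (Mu := hankel_mos (L + n) u alpha p T)); first exact: mc.
    move=> y0 Hy0; apply: PE_mos => i ip j jT; apply: (Hy0 (x i) (u i) j).
    by exists i; split => //; have := KT i ip; lia.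
  + move=> y1 y2 H x' u' j [i [ip -> -> jK]] s sn.
    by apply: (hankel_mos_Fn aNZ H ip); lia.
  exact: tr.
- move=> pbar T0 HT [pp [KT0 [KTi hc]]] xb ub tr.
  pose xs := fun t => \sum_(i < pbar) alpha i *: x i t.
  pose us := fun t => \sum_(i < pbar) alpha i *: u i t.
  have trs : is_traj A B xs us T0.
    by apply: traj_sum => i ip; rewrite -(HT i ip); apply: trajs; lia.
  have aNZ' : forall i, (i < p - pbar)%N -> alpha (pbar + i)%N != 0.
    by move=> i ip; apply: aNZ; lia.
  apply: (final L0 ctrl (win := fun x' u' j =>
      [/\ x' = xs, u' = us & (j + (L + n) <= T0)%N] \/ exists i,
      [/\ (i < p - pbar)%N, x' = x (pbar + i)%N, u' = u (pbar + i)%N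
        & (j + (L + n) <= T (pbar + i)%N)%N])).
  + move=> x' u' j [[-> -> jK]|[i [ip -> -> jK]]] t tK; first by apply: trs; lia.
    by apply: (trajs (pbar + i)%N); lia.
  + apply: (PE_from (Mu := hankel_hyb (L + n) u alpha pbar p T0 T)); first exact: hc.
    move=> y0 Hy0; rewrite /hankel_hyb mul_mx_row -row_mx0; congr row_mx.
      rewrite hankel_cumE; apply: PE_hankel => j jT.
      case: (posnP pbar) => [pb0|pbpos].
        rewrite dot_stackn big1_nat // => k _; rewrite /us.
        by move: (u) (alpha); rewrite pb0 => ?? ; rewrite big_ord0 mulmx0.
      by apply: (Hy0 xs us j); left; split => //; have := KT0 pbpos; lia.
    apply: PE_mos => i ip j jT; apply: (Hy0 (x (pbar + i)%N) (u (pbar + i)%N) j).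
    by right; exists i; split => //; have := KTi (pbar + i)%N; lia.
  + move=> y1 y2 H; move: H; rewrite /hankel_hyb !mul_mx_row add_row_mx -row_mx0.
    case/eq_row_mx; rewrite !hankel_cumE => H1 H2.
    move=> x' u' j [[-> -> jK]|[i [ip -> -> jK]]] s sn.
      by apply: (hankel_Fn H1); lia.
    by apply: (hankel_mos_Fn aNZ' H2 ip); lia.
  exact: tr.
Qed.
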